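(* Let $S=S^\top\in\mathbb{R}^{p\times p}$ with $S>0$, let $V\in\mathbb{R}^{p\times r}$ be a full rank matrix with $r\le p$, and let $Q_V=Q_V^\top\in\mathbb{R}^{r\times r}$ satisfy $0\le Q_V\le V^\top SV$. Then there exists $Q=Q^\top\in\mathbb{R}^{p\times p}$ such that $0\le Q\le S$ and $V^\top QV=Q_V$. *)

(* Defs.v *)
From mathcomp Require Import all_boot all_order all_algebra.
From mathcomp Require Import reals.
Set Implicit Arguments. Unset Strict Implicit. Unset Printing Implicit Defensive.
Import Order.TTheory GRing.Theory Num.Theory.
Local Open Scope ring_scope.

Definition qform (R : realType) (n : nat) (A : 'M[R]_n) (x : 'cV[R]_n) : R :=
  (x^T *m A *m x) 0 0.

(* A >= 0 (positive semidefinite; symmetry required separately). *)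
Definition psd (R : realType) (n : nat) (A : 'M[R]_n) : Prop :=
  forall x : 'cV[R]_n, 0 <= qform A x.

Definition pd (R : realType) (n : nat) (A : 'M[R]_n) : Prop :=
  forall x : 'cV[R]_n, x != 0 -> 0 < qform A x.

Definition loewner_le (R : realType) (n : nat) (A B : 'M[R]_n) : Prop :=
  psd (B - A).

Definition symmx (R : realType) (n : nat) (A : 'M[R]_n) : Prop := A^T = A.

(* Main.v *)
Require Import Defs.
From mathcomp Require Import all_boot all_order all_algebra.
From mathcomp Require Import reals.
Import Order.TTheory GRing.Theory Num.Theory.
Local Open Scope ring_scope.

Lemma qformB (R : realType) n (A B : 'M[R]_n) x :
  qform (A - B) x = qform A x - qform B x.
Proof. by rewrite /qform mulmxBr mulmxBl !mxE. Qed.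

Theorem lemmaA3 (R : realType) (p r : nat)
  (S : 'M[R]_p) (V : 'M[R]_(p, r)) (QV : 'M[R]_r) :
  symmx S -> pd S ->
  (r <= p)%N -> \rank V = r ->
  symmx QV -> psd QV -> loewner_le QV (V^T *m S *m V) ->
  exists Q : 'M[R]_p,
    [/\ symmx Q, psd Q, loewner_le Q S & V^T *m Q *m V = QV].
Proof.
move=> sS pS _ rV sQV pQV lQV.
have [B BV] : exists B : 'M[R]_(r, p), B *m V = 1%:M.
  by apply/row_fullP; rewrite /row_full rV.
set M := V^T *m S *m V.
have Mu : M \in unitmx.
  rewrite unitmxE unitfE; apply/negP => /det0P [v vn0 vM].
  have q0 : qform S (V *m v^T) = 0.
    rewrite /qform trmx_mul trmxK !mulmxA.
    by rewrite -(mulmxA v) -(mulmxA v) -/M vM mul0mx mxE.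
  have x0 : V *m v^T = 0.
    apply/eqP; apply: contraT => /pS; by rewrite q0 ltxx.
  move/negP: vn0; apply; apply/eqP.
  by rewrite -[v]trmxK -[v^T]mul1mx -BV -mulmxA x0 mulmx0 trmx0.
set N := invmx M.
have sM : M^T = M by rewrite /M !trmx_mul trmxK sS mulmxA.
have sN : N^T = N by rewrite /N trmx_inv sM.
have MN : M *m N = 1%:M by rewrite mulmxV.
have NM : N *m M = 1%:M by rewrite mulVmx.
set P := V *m N *m V^T *m S.
have PtS : P^T *m S = S *m P.
  by rewrite /P !trmx_mul !trmxK sS sN !mulmxA.
have PP : P *m P = P.
  rewrite /P -!mulmxA. rewrite [V^T *m (S *m _)]mulmxA [V^T *m S *m (V *m _)]mulmxA -/M.
  rewrite [X in V *m (N *m X)]mulmxA. by rewrite MN mul1mx.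
have qM : forall x, qform M (N *m V^T *m S *m x) = (x^T *m S *m P *m x) 0 0.
  move=> x; rewrite /qform /P !trmx_mul trmxK sS sN -!mulmxA.
  rewrite [V^T *m (S *m (V *m _))]mulmxA [V^T *m S *m (V *m _)]mulmxA -/M.
  by rewrite [X in V *m (N *m X)]mulmxA MN mul1mx !mulmxA.
have qQ : forall x, qform (S *m V *m N *m QV *m N *m V^T *m S) x =
    qform QV (N *m V^T *m S *m x).
  by move=> x; rewrite /qform !trmx_mul trmxK sS sN !mulmxA.
exists (S *m V *m N *m QV *m N *m V^T *m S); split.
- by rewrite /symmx !trmx_mul trmxK sS sN sQV !mulmxA.
- move=> x; rewrite qQ; exact: pQV.
- move=> x; rewrite qformB qQ.
  have := lQV (N *m V^T *m S *m x); rewrite qformB subr_ge0 => le1.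
  apply: le_trans (_ : qform S x - qform M (N *m V^T *m S *m x) <= _).
    set w := x - P *m x.
    have -> : qform S x - qform M (N *m V^T *m S *m x) = qform S w.
      rewrite qM /qform.
      have -> : w^T = x^T - (P *m x)^T by rewrite /w linearB.
      rewrite /w trmx_mul !mulmxBl -(mulmxA x^T P^T) PtS.
      rewrite mulmxA !mulmxBr.
      rewrite (mulmxA (x^T *m S *m P) P x) -(mulmxA (x^T *m S) P P) PP.
      rewrite (mulmxA (x^T *m S) P x). set a := x^T *m S *m P *m x. rewrite subrr. by rewrite subr0 !mxE.
    have [->|wn0] := eqVneq w 0; first by rewrite /qform mulmx0 mxE.
    exact/ltW/pS.
  by rewrite lerD2l lerN2.
- rewrite !mulmxA -/M MN mul1mx -!mulmxA.
  by rewrite [V^T *m (S *m V)]mulmxA -/M NM mulmx1.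
Qed.
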